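(* Let $G$ be a graph and $r>2$ an integer. Then $$\rho_o(G)\leq \rho_o(G\square K_r)\leq \alpha_2(G).$$ Moreover, if $G$ is triangle-free and there is an $\alpha_2(G)$-set $S$ with $\chi(G/S)\leq r$, then $\rho_o(G\square K_r)=\alpha_2(G)$.
   Context: All graphs are finite and simple. An open packing of $G$ is a set $P\subseteq V(G)$ whose vertices have pairwise disjoint open neighborhoods; $\rho_o(G)$ is the maximum size of an open packing. A set $S\subseteq V(G)$ is $2$-independent if the induced subgraph $G[S]$ has maximum degree less than $2$ (i.e., $G[S]$ consists of isolated vertices and isolated edges); $\alpha_2(G)$ is the maximum size of a $2$-independent set, and an $\alpha_2(G)$-set is a $2$-independent set of that size. For a $2$-independent set $S$, the graph $G/S$ has as vertices the connected components of $G[S]$, two components $C,C'$ being adjacent iff $d_G(C,C')=2$, where $d_G(C,C')=\min\{d_G(x,y): x\in V(C), y\in V(C')\}$. $\chi$ denotes chromatic number, $K_r$ the complete graph on $r$ vertices. The Cartesian product $G\square H$ has vertex set $V(G)\times V(H)$, with $(g,h)$ adjacent to $(g',h')$ iff ($gg'\in E(G)$ and $h=h'$) or ($g=g'$ and $hh'\in E(H)$). *)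

(* Defs.v *)
(* Simple graphs = symmetric irreflexive relations on a finType. *)
From mathcomp Require Import all_boot.
Set Implicit Arguments. Unset Strict Implicit. Unset Printing Implicit Defensive.

Section Defs.
Variable V : finType.
Variable e : rel V.

Definition nbh (x : V) : {set V} := [set y | e x y].

Definition open_packing (P : {set V}) : bool :=
  [forall x in P, forall y in P, (x != y) ==> [disjoint nbh x & nbh y]].

Definition rho_o : nat := \max_(P : {set V} | open_packing P) #|P|.

Definition two_indep (S : {set V}) : bool :=
  [forall x in S, #|[set y in S | e x y]| < 2].

Definition alpha2 : nat := \max_(S : {set V} | two_indep S) #|S|.

Definition alpha2_set (S : {set V}) : bool := two_indep S && (#|S| == alpha2).

Definition triangle_free : Prop :=
  forall x y z : V, ~ [&& e x y, e y z & e x z].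

Definition dist_le1 (x y : V) : bool := (x == y) || e x y.
Definition dist_eq2 (x y : V) : bool :=
  ~~ dist_le1 x y && [exists z, e x z && e z y].

(* d_G(C,C') = 2 for vertex sets C, C' (minimum distance over pairs equals 2) *)
Definition setdist_eq2 (C C' : {set V}) : bool :=
  [forall x in C, forall y in C', ~~ dist_le1 x y] &&
  [exists x in C, exists y in C', dist_eq2 x y].

Definition indrel (S : {set V}) : rel V := fun a b => [&& a \in S, b \in S & e a b].
Definition comp (S : {set V}) (x : V) : {set V} :=
  [set y in S | connect (indrel S) x y].
Definition comps (S : {set V}) : {set {set V}} := [set comp S x | x in S].

(* adjacency of the graph G/S on the vertex set comps S *)
Definition quot_adj (S : {set V}) : rel {set V} :=
  fun C C' => (C != C') && setdist_eq2 C C'.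

Definition cartK (r : nat) : rel (V * 'I_r) :=
  fun u v => (e u.1 v.1 && (u.2 == v.2)) || ((u.1 == v.1) && (u.2 != v.2)).
End Defs.
Arguments cartK {V} e r _ _.

Section Chi.
Variable W : finType.
(* proper k-colouring of the graph (A, f) with A : {set W} the vertex set *)
Definition colorable (A : {set W}) (f : rel W) (k : nat) : bool :=
  [exists c : {ffun W -> 'I_k},
    [forall x in A, forall y in A, f x y ==> (c x != c y)]].
(* chromatic number: least k with a proper k-colouring (k = #|W| always works) *)
Definition chi (A : {set W}) (f : rel W) : nat :=
  \big[minn/#|W|]_(k < #|W|.+1 | colorable A f k) k.
End Chi.

(* Main.v *)
Require Import Defs.
From mathcomp Require Import all_boot.
From mathcomp Require Import zify.

Section Aux.
Variable T : finType.
Variable e : rel T.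
Hypothesis esym : symmetric e.
Hypothesis eirr : irreflexive e.

Lemma disjP (A B : {set T}) :
  (forall z, z \in A -> z \in B -> False) -> [disjoint A & B].
Proof.
move=> H; rewrite -setI_eq0; apply/eqP/setP => z; rewrite !inE.
by apply/negbTE/negP => /andP [] /H X /X.
Qed.

Lemma disjE' (A B : {set T}) z : [disjoint A & B] -> z \in A -> z \in B -> False.
Proof. by move=> D zA; rewrite (disjointFr D zA). Qed.

Lemma packE (P : {set T}) x y : open_packing e P -> x \in P -> y \in P -> x != y ->
  [disjoint nbh e x & nbh e y].
Proof.
move=> /forallP /(_ x) /implyP H xP yP xy.
by have /forallP /(_ y) /implyP /(_ yP) /implyP := H xP; apply.
Qed.
End Aux.
Arguments disjE' {T A B} z _ _ _.
Arguments packE {T e P x y} _ _ _ _.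


Section Part1.
Variable T : finType.
Variable e : rel T.
Hypothesis esym : symmetric e.
Hypothesis eirr : irreflexive e.
Variable r : nat.
Hypothesis hr : 2 < r.

Lemma lift_pack (P : {set T}) (i0 : 'I_r) :
  open_packing e P -> open_packing (cartK e r) ((fun x => (x, i0)) @: P).
Proof.
move=> /forallP hP; apply/forallP => u; apply/implyP => /imsetP [x xP ->].
apply/forallP => v; apply/implyP => /imsetP [y yP ->]; apply/implyP => neq.
have xy : x != y by apply: contraNneq neq => ->.
have := hP x; rewrite xP /= => /forallP /(_ y); rewrite yP xy /= => D.
apply: disjP => [[z t]]; rewrite !inE /cartK /=.
case/orP => /andP [h1 h2]; case/orP => /andP [h3 h4].
- by apply: (disjE' z D); rewrite inE.
- by rewrite h2 in h4.
- by rewrite h4 in h2.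
- by move: xy; rewrite (eqP h1) (eqP h3) eqxx.
Qed.

Lemma fiber (P : {set T * 'I_r}) u v :
  open_packing (cartK e r) P -> u \in P -> v \in P -> u.1 = v.1 -> u = v.
Proof.
move=> hP uP vP e1; apply/eqP/negPn/negP => neq.
have D := packE hP uP vP neq.
have : 0 < #|~: [set u.2; v.2]|.
  have := cardsC [set u.2; v.2]; rewrite cards2 card_ord; case: (u.2 != v.2) => /=; lia.
rewrite card_gt0 => /set0Pn [k]; rewrite !inE negb_or => /andP [k1 k2].
apply: (disjE' (u.1, k) D); rewrite !inE /cartK /= ?e1 eqxx /= eq_sym ?k1 ?k2 orbT //.
Qed.

Lemma proj_size (P : {set T * 'I_r}) :
  open_packing (cartK e r) P -> #|fst @: P| = #|P|.
Proof.
move=> hP; apply: card_in_imset => u v uP vP; rewrite /=.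
move=> h; apply: (@fiber P u v hP uP vP h).
Qed.

Lemma proj_indep (P : {set T * 'I_r}) :
  open_packing (cartK e r) P -> two_indep e (fst @: P).
Proof.
move=> hP; apply/forallP => x; apply/implyP => /imsetP [u uP ->].
rewrite ltnNge; apply/negP => /card_gt1P [y [z [yin zin yz]]].
move: yin zin yz; rewrite !inE => /andP [/imsetP [v vP ->] ev] /andP [/imsetP [w wP ->] ew] yz.
have same : forall v, v \in P -> e u.1 v.1 -> v.2 = u.2.
  move=> v' v'P ev'; apply/eqP/negPn/negP => neq.
  have uv : u != v' by apply/negP => /eqP uv; move: ev'; rewrite -uv eirr.
  have D := packE hP uP v'P uv.
  apply: (disjE' (u.1, v'.2) D); rewrite !inE /cartK /= ?eqxx ?andbT.
    by rewrite eq_sym neq orbT.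
  by rewrite esym ev'.
have vw : v != w by apply/negP => /eqP vw; move: yz; rewrite vw eqxx.
have D := packE hP vP wP vw.
apply: (disjE' u D); rewrite !inE /cartK /=.
  by rewrite (same v vP ev) esym ev eqxx.
by rewrite (same w wP ew) esym ew eqxx.
Qed.

Lemma part1 : rho_o e <= rho_o (cartK e r) <= alpha2 e.
Proof.
apply/andP; split.
  apply/bigmax_leqP => P hP.
  have i0 : 'I_r by exists 0; lia.
  have hL := @lift_pack P i0 hP.
  have hc : #|(fun x => (x, i0)) @: P| = #|P|.
    by apply: card_in_imset => a b _ _ [].
  rewrite -hc; exact: (leq_bigmax_cond _ hL).
apply/bigmax_leqP => P hP.
rewrite -(@proj_size P hP).
exact: (leq_bigmax_cond _ (@proj_indep P hP)).
Qed.

End Part1.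

Section Chi2.
Variable W : finType.

Lemma col_mono (A : {set W}) (f : rel W) k k' :
  colorable A f k -> k <= k' -> colorable A f k'.
Proof.
move=> /existsP [c hc] h; apply/existsP; exists [ffun x => widen_ord h (c x)].
apply/forallP => x; apply/implyP => xA; apply/forallP => y; apply/implyP => yA.
apply/implyP => fxy; rewrite !ffunE -val_eqE /= val_eqE.
by have /forallP /(_ y) := implyP (forallP hc x) xA; rewrite yA /= => /implyP; apply.
Qed.

Lemma chi_col (A : {set W}) (f : rel W) :
  (forall x y, f x y -> x != y) -> colorable A f (chi A f).
Proof.
move=> hf; rewrite /chi; apply: (big_ind (fun k => colorable A f k)).
- apply/existsP; exists [ffun x => enum_rank x].
  apply/forallP => x; apply/implyP => xA; apply/forallP => y; apply/implyP => yA.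
  apply/implyP => /hf; rewrite !ffunE; apply: contra => /eqP h.
  by apply/eqP; apply: enum_rank_inj.
- by move=> x y hx hy; rewrite /minn; case: ifP.
- by [].
Qed.
End Chi2.

Section Part2.
Variable T : finType.
Variable e : rel T.
Hypothesis esym : symmetric e.
Hypothesis eirr : irreflexive e.

Lemma indrel_sym S : symmetric (indrel e S).
Proof. by move=> a b; rewrite /indrel esym andbCA. Qed.

Lemma step S x y w : two_indep e S -> x \in S -> w \in S -> y \in S ->
  e y x -> e y w -> w = x.
Proof.
move=> hS xS wS yS eyx eyw; apply/eqP/negPn/negP => wx.
have := implyP (forallP hS y) yS; rewrite ltnNge => /negP; apply.
by apply/card_gt1P; exists w, x; rewrite !inE wS xS eyx eyw wx.
Qed.

Lemma compL S x y : two_indep e S -> x \in S -> connect (indrel e S) x y ->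
  (y == x) || e x y.
Proof.
move=> hS xS /connectP [p pth ->].
have H : forall q z, path (indrel e S) z q -> (z == x) || e x z ->
    (last z q == x) || e x (last z q).
  elim => [|w q IH] z //= /andP [/and3P [zS wS ezw] pth'] hz; apply: IH pth' _.
  case/orP: hz => [/eqP zx | exz]; first by rewrite -zx ezw orbT.
  by rewrite (@step S x z w hS xS wS zS) ?eqxx // esym.
by apply: (H p x pth); rewrite eqxx.
Qed.

Lemma comp_eq S x y : connect (indrel e S) x y -> Defs.comp e S x = Defs.comp e S y.
Proof.
move=> cxy; apply/setP => w; rewrite !inE.
by rewrite (same_connect (sym_connect_sym (@indrel_sym S)) cxy).
Qed.

Lemma in_comp (S : {set T}) x : x \in S -> x \in Defs.comp e S x.
Proof. by move=> xS; rewrite inE xS connect0. Qed.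

Lemma adj_comp (S : {set T}) x y : x \in S -> y \in S -> e x y -> Defs.comp e S x = Defs.comp e S y.
Proof. by move=> xS yS exy; apply: comp_eq; apply: connect1; rewrite /indrel xS yS exy. Qed.

Lemma part2 r S (c : {ffun {set T} -> 'I_r}) :
  triangle_free e -> two_indep e S ->
  (forall C C', C \in comps e S -> C' \in comps e S -> quot_adj e S C C' -> c C != c C') ->
  open_packing (cartK e r) [set (x, c (Defs.comp e S x)) | x in S].
Proof.
move=> tf hS hc.
apply/forallP => u; apply/implyP => /imsetP [x xS ->].
apply/forallP => v; apply/implyP => /imsetP [y yS ->]; apply/implyP => neq.
have xy : x != y by apply/negP => /eqP exy; move: neq; rewrite exy eqxx.
have cin : forall w, w \in S -> Defs.comp e S w \in comps e S.
  by move=> w wS; apply/imsetP; exists w.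
apply: disjP => [[z t]]; rewrite !inE /cartK /=.
case/orP => /andP [h1 h2]; case/orP => /andP [h3 h4].
- case exy: (e x y).
    by apply: (tf x y z); rewrite exy h1 h3.
  have cxy : Defs.comp e S x != Defs.comp e S y.
    apply/negP => /eqP ceq.
    have : y \in Defs.comp e S x by rewrite ceq in_comp.
    rewrite inE yS /= => /(@compL S x y hS xS); rewrite exy orbF eq_sym (negbTE xy).
    by [].
  have qa : quot_adj e S (Defs.comp e S x) (Defs.comp e S y).
    rewrite /quot_adj cxy /setdist_eq2 /=; apply/andP; split.
      apply/forallP => p; apply/implyP => pin; apply/forallP => q; apply/implyP => qin.
      move: (pin) (qin); rewrite !inE => /andP [pS cxp] /andP [qS cyq].
      apply/negP => /orP [/eqP pq | epq]; apply/negP: cxy; apply/negPn/eqP.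
        by rewrite (@comp_eq S x p cxp) (@comp_eq S y q cyq) pq.
      by rewrite (@comp_eq S x p cxp) (@comp_eq S y q cyq) (@adj_comp S p q pS qS epq).
    apply/existsP; exists x; rewrite in_comp //=; apply/existsP; exists y.
    rewrite in_comp //= /dist_eq2 /dist_le1 negb_or xy exy /=.
    by apply/existsP; exists z; rewrite h1 esym h3.
  have := hc _ _ (cin x xS) (cin y yS) qa.
  by rewrite (eqP h2) (eqP h4) eqxx.
- move: h1; rewrite -(eqP h3) => exy.
  by move: h4; rewrite -(eqP h2) (@adj_comp S x y xS yS exy) eqxx.
- move: h3; rewrite -(eqP h1) => eyx.
  by move: h2; rewrite -(eqP h4) (@adj_comp S y x yS xS eyx) eqxx.
- by move: xy; rewrite (eqP h1) (eqP h3) eqxx.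
Qed.

End Part2.

Theorem mainTheorem6 (T : finType) (e : rel T)
  (esym : symmetric e) (eirr : irreflexive e) (r : nat) (hr : 2 < r) :
  rho_o e <= rho_o (cartK e r) <= alpha2 e /\
  (triangle_free e ->
   (exists S : {set T}, alpha2_set e S /\ chi (comps e S) (quot_adj e S) <= r) ->
   rho_o (cartK e r) = alpha2 e).
Proof.
have p1 := @part1 T e esym eirr r hr.
split => // tf [S [/andP [hS /eqP hcard] hchi]].
have hcol : colorable (comps e S) (quot_adj e S) r.
  apply: (@col_mono _ _ _ _ _ _ hchi); apply: chi_col => C C' /andP [] //.
case/existsP: hcol => c hc.
apply/eqP; rewrite eqn_leq; case/andP: p1 => _ -> /=.
have hc' : forall C C', C \in comps e S -> C' \in comps e S -> quot_adj e S C C' -> c C != c C'.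
  move=> C C' CS C'S; have /forallP /(_ C') := implyP (forallP hc C) CS.
  by rewrite C'S /= => /implyP.
have hP' := @part2 T e esym r S c tf hS hc'.
rewrite -hcard.
have -> : #|S| = #|[set (x, c (Defs.comp e S x)) | x in S]|.
  by rewrite card_in_imset // => a b _ _ [].
exact: (leq_bigmax_cond _ hP').
Qed.
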